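(* $\mathrm{conv}\sqsubseteq\mathcal{BI}\sqsubseteq\mathrm{Fin}^2$, while $\mathcal{BI}\not\sqsubseteq\mathrm{conv}$ and $\mathrm{Fin}^2\not\sqsubseteq\mathcal{BI}$.
   Context: An ideal on an infinite countable set $X$ is a family $\mathcal{I}\subseteq\mathcal{P}(X)$ closed under subsets and finite unions, containing all finite subsets, with $X\notin\mathcal{I}$. $\mathrm{conv}$ is the ideal on $\mathbb{Q}\cap[0,1]$ generated by the ranges of sequences in $\mathbb{Q}\cap[0,1]$ that converge in $[0,1]$ (i.e., $A\in\mathrm{conv}$ iff $A$ is covered by finitely many such ranges). $\mathrm{Fin}^2$: ideal on $\omega^2$ of all $A$ with only finitely many $n$ such that $\{m:(n,m)\in A\}$ is infinite. $\mathcal{BI}$: ideal on $\omega^3$ of all $A$ for which there is $k$ with $\{(j,l):(i,j,l)\in A\}\in\mathrm{Fin}^2$ for $i<k$ and finite for $i\ge k$. $\mathcal{I}\sqsubseteq\mathcal{J}$: there is a bijection $f:\bigcup\mathcal{J}\to\bigcup\mathcal{I}$ with $f^{-1}[A]\in\mathcal{J}$ for all $A\in\mathcal{I}$. *)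

(* Defs.v *)
From HB Require Import structures.
From mathcomp Require Import all_boot all_order all_algebra.
From mathcomp Require Import all_classical all_reals all_analysis.
From mathcomp Require Import Rstruct Rstruct_topology.
Set Implicit Arguments. Unset Strict Implicit. Unset Printing Implicit Defensive.
Import Order.TTheory GRing.Theory Num.Theory.
Local Open Scope classical_set_scope.
Local Open Scope ring_scope.

Definition Q01 := {q : rat | (0 <= q <= 1)%R}.

Definition Q01_to_R (x : Q01) : Rdefinitions.R := ratr (sval x).

Definition conv_seq (s : nat -> Q01) : Prop :=
  exists l : Rdefinitions.R, (0 <= l <= 1)%R /\
    ((fun n => Q01_to_R (s n)) @ \oo --> l).

Definition conv : set (set Q01) :=
  fun A => exists ss : seq (nat -> Q01),
    (forall s, s \in ss -> conv_seq s) /\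
    A `<=` [set x | exists2 s, s \in ss & range s x].

Definition Fin2 : set (set (nat * nat)) :=
  fun A => finite_set [set n | infinite_set [set m | A (n, m)]].

Definition BI : set (set (nat * nat * nat)) :=
  fun A => exists k : nat,
    (forall i, (i < k)%N -> Fin2 [set jl | A (i, jl.1, jl.2)]) /\
    (forall i, (k <= i)%N -> finite_set [set jl | A (i, jl.1, jl.2)]).

Definition ideal_below (X Y : Type) (I : set (set X)) (J : set (set Y)) : Prop :=
  exists f : Y -> X, bijective f /\ forall A, I A -> J (f @^-1` A).

(* Main.v *)
Require Import Defs.
From mathcomp Require Import all_boot all_classical.
From HB Require Import structures.
From mathcomp Require Import all_order all_algebra.
From mathcomp Require Import all_reals all_analysis.
From mathcomp Require Import Rstruct Rstruct_topology.
From mathcomp Require Import ring lra.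
From Stdlib Require Cantor.
Set Implicit Arguments. Unset Strict Implicit. Unset Printing Implicit Defensive.
Import Order.TTheory GRing.Theory Num.Theory.
Local Open Scope classical_set_scope.
Local Open Scope ring_scope.
Notation RR := Rdefinitions.R.
Lemma cvg_ev (s : nat -> RR) (l eps : RR) : s @ \oo --> l -> 0 < eps ->
  exists M, forall n, (M <= n)%N -> `|l - s n| < eps.
Proof.
move=> H e0.
have := proj1 (@cvgrPdist_lt RR RR^o nat \oo _ s l) H eps e0.
move=> [M _ HM].
exists M => n Mn. exact: HM.
Qed.

Lemma avoid (L : seq RR) (a b : RR) : a < b ->
  exists q : rat, a < ratr q < b /\ ratr q \notin L.
Proof.
elim: L a b => [|h L IH] a b ab.
  by have [q] := rat_in_itvoo ab; rewrite in_itv /= => hq; exists q.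
case: (boolP (a < h < b)) => [/andP[ah hb]|nh].
  have [q [/andP[aq qh] qL]] := IH a h ah.
  exists q; split; first by rewrite aq /= (lt_trans qh hb).
  by rewrite in_cons negb_or qL andbT lt_eqF.
have [q [hq qL]] := IH a b ab.
exists q; split => //.
rewrite in_cons negb_or qL andbT; apply/eqP => e; move: nh; by rewrite -e hq.
Qed.

Lemma mkQ01 (q : rat) : 0 <= ratr q :> RR -> ratr q <= 1 :> RR ->
  exists x : Q01, Q01_to_R x = ratr q.
Proof.
move=> h0 h1.
have hq : (0 <= q <= 1)%R.
  by rewrite -(ler0q RR) h0 /= -(ler_rat RR) rmorph1.
by exists (exist _ q hq).
Qed.

Lemma notconv (Z : set Q01) (a b : RR) : a < b ->
  (forall a' b' (L : seq Q01), a <= a' -> a' < b' -> b' <= b ->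
     exists z, Z z /\ a' < Q01_to_R z < b' /\ z \notin L) -> Defs.conv Z -> False.
Proof.
move=> ab dense [ss [Hss sub]].
suff key : forall ss' : seq (nat -> Q01), (forall s, s \in ss' -> conv_seq s) ->
  forall a' b' (L : seq Q01), a <= a' -> a' < b' -> b' <= b ->
  exists z, Z z /\ a' < Q01_to_R z < b' /\ z \notin L /\
     ((exists2 s, s \in ss' & range s z) -> False).
  have [z [Zz [_ [_ nr]]]] := key ss Hss a b [::] (lexx a) ab (lexx b).
  exact: nr (sub z Zz).
elim=> [|s ss' IH] Hs a' b' L aa' ab' bb'.
  have [z [Zz [zin zL]]] := dense a' b' L aa' ab' bb'.
  by exists z; do !split => //; case.
have [l [_ cv]] := Hs s (mem_head _ _).
have Hs' : forall s', s' \in ss' -> conv_seq s'.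
  by move=> s' h; apply: Hs; rewrite in_cons h orbT.
pose d := (b' - a') / 4.
have d0 : 0 < d by rewrite /d divr_gt0 // subr_gt0.
have [M HM] := cvg_ev cv d0.
pose L' := L ++ [seq s n | n <- iota 0 M].
have [a'' [b'' [h1 [h2 [h3 far]]]]] : exists a'' b'', a' <= a'' /\ a'' < b''
    /\ b'' <= b' /\ (forall y, a'' < y < b'' -> d <= `|l - y|).
  case: (lerP l ((a' + b') / 2)) => hl.
    exists ((a' + 3 * b') / 4), b'; do !split; rewrite /d; try lra.
    move=> y /andP[y1 y2]; rewrite ler_normr; apply/orP; right; lra.
  exists a', ((3 * a' + b') / 4); do !split; rewrite /d; try lra.
  move=> y /andP[y1 y2]; rewrite ler_normr; apply/orP; left; lra.
have [z [Zz [zin [zL nr]]]] :=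
  IH Hs' a'' b'' L' (le_trans aa' h1) h2 (le_trans h3 bb').
exists z; split; first done.
split.
  by move: zin => /andP[z1 z2]; rewrite (le_lt_trans h1 z1) (lt_le_trans z2 h3).
split.
  by move: zL; rewrite mem_cat negb_or => /andP[].
move=> [s0]; rewrite in_cons => /orP[/eqP -> [n _ e] | s0in rz].
  case: (leqP M n) => Mn.
    have := HM n Mn; rewrite /= e => lt.
    by have := far _ zin; rewrite leNgt lt.
  move: zL; rewrite mem_cat negb_or => /andP[_ /negP]; apply.
  by rewrite -e; apply: map_f; rewrite mem_iota.
by apply: nr; exists s0.
Qed.

Lemma finite_nat_bound (A : set nat) : finite_set A ->
  exists N, forall n, A n -> (n < N)%N.
Proof.
move=> /finite_seqP [s ->].
exists (foldr maxn 0%N s).+1 => n /=.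
elim: s => [//|x s IH]; rewrite inE => /orP [/eqP ->|/IH].
  by rewrite /= ltnS leq_maxl.
by move=> h; rewrite /= ltnS; apply: leq_trans (leq_maxr _ _); rewrite -ltnS.
Qed.

Lemma Q01_inhabited : exists x : Q01, Q01_to_R x = 0.
Proof.
have h0 : 0 <= ratr 0 :> RR by rewrite rmorph0.
have h1 : ratr 0 <= 1 :> RR by rewrite rmorph0 ler01.
have [x hx] := mkQ01 h0 h1.
by exists x; rewrite hx rmorph0.
Qed.

Lemma split_lemma (pi : Q01 -> nat) (a b : RR) : 0 <= a -> a < b -> b <= 1 ->
  (forall Z : set Q01, (forall z, Z z -> a < Q01_to_R z < b) ->
     (forall m, finite_set [set z | Z z /\ pi z = m]) -> Defs.conv Z) ->
  exists a' b' N, a <= a' /\ a' < b' /\ b' <= b /\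
     forall x, a' < Q01_to_R x < b' -> (pi x < N)%N.
Proof.
move=> a0 ab b1 H.
apply: contrapT => Hn.
have [x0 _] := Q01_inhabited.
pose valid (p : rat * rat) :=
  a <= ratr p.1 /\ ratr p.1 < ratr p.2 :> RR /\ ratr p.2 <= b.
have H' : forall p : rat * rat, exists x : Q01, valid p ->
   ratr p.1 < Q01_to_R x < ratr p.2 /\ (pickle p <= pi x)%N.
  move=> [q1 q2].
  case: (pselect (valid (q1, q2))) => [[h1 [h2 h3]]|nv]; last first.
    by exists x0 => /nv.
  apply: contrapT => Hx; apply: Hn.
  exists (ratr q1), (ratr q2), (pickle (q1, q2)); do !split => //.
  move=> x xin; rewrite ltnNge; apply/negP => px; apply: Hx.
  by exists x => _; split.
have [z Hz] := choice H'.
pose Z := z @` valid.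
have Zin : forall x, Z x -> a < Q01_to_R x < b.
  move=> _ [p pv <-]; have [/andP [l1 l2] _] := Hz p pv.
  case: pv => h1 [h2 h3].
  by rewrite (le_lt_trans h1 l1) (lt_le_trans l2 h3).
have Zfin : forall m, finite_set [set x | Z x /\ pi x = m].
  move=> m; apply: (@sub_finite_set _ _ (z @` (pickle @^-1` `I_(m.+1)))).
    move=> x [[p pv <-] pm]; exists p => //.
    by have [_ le] := Hz p pv; rewrite pm in le; rewrite /preimage /= ltnS.
  apply: finite_image; apply: finite_preimage; last exact: finite_II.
  by move=> x y _ _; exact: (pcan_inj (@pickleK _)).
have cZ := H Z Zin Zfin.
apply: (notconv ab _ cZ).
move=> a' b' L h1 h2 h3.
have [K HK] := finite_nat_bound (finite_seq (map pi L)).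
pose P := pmap unpickle (iota 0 K) : seq (rat * rat).
have [q2 [/andP [q21 q22] _]] := avoid [::] h2.
have [q1 [/andP[q11 q12] q1P]] := avoid (map (fun p => ratr p.1) P) q21.
have pv : valid (q1, q2).
  split; first by apply: ltW; apply: le_lt_trans h1 q11.
  by split => //; apply: ltW; apply: lt_le_trans h3.
have pK : (K <= pickle (q1, q2))%N.
  rewrite leqNgt; apply/negP => lt; move: q1P => /negP; apply.
  apply/mapP; exists (q1, q2) => //; rewrite mem_pmap.
  by apply/mapP; exists (pickle (q1, q2)); rewrite ?mem_iota ?pickleK.
have [/andP[zin1 zin2] zle] := Hz _ pv.
exists (z (q1, q2)); split; first by exists (q1, q2).
split.
  by rewrite (lt_trans q11 zin1) (lt_trans zin2 q22).
apply/negP => zL; have := HK _ (map_f pi zL).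
by rewrite ltnNge (leq_trans pK zle).
Qed.

Import Defs.

Lemma conv_sub (A B : set Q01) : A `<=` B -> conv B -> conv A.
Proof. by move=> AB [ss [h1 h2]]; exists ss; split => // x /AB /h2. Qed.

Lemma part3 : ideal_below BI conv -> False.
Proof.
move=> [g [gbij H]].
have preim : forall Z, BI (g @` Z) -> conv Z.
  move=> Z hB; apply: conv_sub (H _ hB) => x Zx; by exists x.
have [a1 [b1 [N1 [h1 [h2 [h3 HN1]]]]]] :
    exists a' b' N, 0 <= a' /\ a' < b' /\ b' <= 1 /\
     forall x, a' < Q01_to_R x < b' -> ((g x).1.1 < N)%N.
  apply: (@split_lemma (fun x => (g x).1.1) 0 1 (lexx 0) ltr01 (lexx 1)).
  move=> Z _ Zfin; apply: preim.
  exists 0%N; split => // i _.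
  apply: (sub_finite_set _ (finite_image (fun x => ((g x).1.2, (g x).2)) (Zfin i))).
  move=> [j l] /= [x Zx gx]; exists x; first by split => //; rewrite gx.
  by rewrite gx.
have [a2 [b2 [N2 [h4 [h5 [h6 HN2]]]]]] :
    exists a' b' N, a1 <= a' /\ a' < b' /\ b' <= b1 /\
     forall x, a' < Q01_to_R x < b' -> ((g x).1.1 + (g x).1.2 < N)%N.
  apply: (@split_lemma (fun x => ((g x).1.1 + (g x).1.2)%N) a1 b1 h1 h2 h3).
  move=> Z Zin Zfin; apply: preim.
  exists N1; split.
    move=> i _; rewrite /Fin2.
    apply: (@sub_finite_set _ _ set0); last exact: finite_set0.
    move=> j /= Hinf; apply: Hinf.
    apply: (sub_finite_set _ (finite_image (fun x => (g x).2) (Zfin (i + j)%N))).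
    move=> l /= [x Zx gx]; exists x; first by split => //; rewrite gx.
    by rewrite gx.
  move=> i iN; apply: (@sub_finite_set _ _ set0); last exact: finite_set0.
  move=> [j l] /= [x Zx gx].
  by have := HN1 x (Zin x Zx); rewrite gx /= ltnNge iN.
pose B := [set t : nat * nat * nat | (t.1.1 + t.1.2 < N2)%N].
have hB : BI B.
  exists N2; split.
    move=> i _; rewrite /Fin2.
    apply: (@sub_finite_set _ _ `I_N2); last exact: finite_II.
    move=> j /= Hinf; rewrite ltnNge; apply/negP => jN; apply: Hinf.
    apply: (@sub_finite_set _ _ set0); last exact: finite_set0.
    move=> l /= lt; move: jN; rewrite leqNgt; apply/negP/negPn.
    exact: leq_ltn_trans (leq_addl _ _) lt.
  move=> i iN; apply: (@sub_finite_set _ _ set0); last exact: finite_set0.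
  move=> [j l] /= lt; move: iN; rewrite leqNgt; apply/negP/negPn.
  exact: leq_ltn_trans (leq_addr _ _) lt.
apply: (notconv h5 _ (H _ hB)).
move=> a' b' L ha hab hb.
have [q [/andP[q1 q2] qL]] := avoid (map Q01_to_R L) hab.
have q0 : 0 <= ratr q :> RR.
  by apply: ltW; apply: le_lt_trans q1; apply: le_trans ha; apply: le_trans h4.
have q1' : ratr q <= 1 :> RR.
  apply: ltW; apply: lt_le_trans q2 _; apply: le_trans hb _.
  by apply: le_trans h6 _.
have [x hx] := mkQ01 q0 q1'.
exists x; split.
  apply: HN2; rewrite hx; apply/andP; split.
    exact: le_lt_trans ha q1.
  exact: lt_le_trans q2 hb.
split; first by rewrite hx q1 q2.
by apply/negP => xL; move: qL; rewrite -hx (map_f _ xL).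
Qed.

Lemma part2 : ideal_below BI Fin2.
Proof.
pose f (p : nat*nat) : nat*nat*nat :=
  ((Cantor.of_nat p.1).1, (Cantor.of_nat p.1).2, p.2).
exists f; split.
  exists (fun t : nat*nat*nat => (Cantor.to_nat (t.1.1, t.1.2), t.2)).
  - case=> n m; rewrite /f; congr pair.
    transitivity (Cantor.to_nat (Cantor.of_nat n)).
      by case: (Cantor.of_nat n).
    exact: Cantor.cancel_to_of.
  - by case=> [[i j] m]; rewrite /f Cantor.cancel_of_to.
move=> A [k [Hlt Hge]].
rewrite /Fin2.
pose P := \bigcup_(i in `I_k) ((fun j => Cantor.to_nat (i, j)) @`
            [set j | infinite_set [set m | A (i, j, m)]]).
apply: (@sub_finite_set _ _ P).
  move=> n /= Hinf.
  have Hi : ((Cantor.of_nat n).1 < k)%N.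
    rewrite ltnNge; apply/negP => ik.
    apply: Hinf.
    apply: (sub_finite_set _ (finite_image snd (Hge _ ik))).
    move=> m /= Am; exists ((Cantor.of_nat n).2, m) => //.
  exists (Cantor.of_nat n).1 => //.
  exists (Cantor.of_nat n).2 => //.
  transitivity (Cantor.to_nat (Cantor.of_nat n)).
    by case: (Cantor.of_nat n).
  exact: Cantor.cancel_to_of.
apply: bigcup_finite; first exact: finite_II.
move=> i /= ik; apply: finite_image; exact: (Hlt i ik).
Qed.

Lemma part4 : ~ ideal_below Fin2 BI.
Proof.
move=> [h [hbij H]].
have [i0 [N HN]] : exists i0 N, forall j l, ((h (i0, j, l)).1 < N)%N.
  apply: contrapT => Hn.
  have Hc : forall p : nat * nat, exists jl : nat*nat,
      (p.2 <= (h (p.1, jl.1, jl.2)).1)%N.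
    move=> [i N]; apply: contrapT => Hx; apply: Hn; exists i, N => j l.
    rewrite ltnNge; apply/negP => HN; apply: Hx; by exists (j, l).
  have [c Hcs] := choice Hc.
  pose z (i t : nat) := (i, (c (i, (i + t)%N)).1, (c (i, (i + t)%N)).2).
  pose Z := [set x | exists i t, x = z i t].
  have FB : Fin2 (h @` Z).
    apply: (@sub_finite_set _ _ set0); last exact: finite_set0.
    move=> n /= Hinf; apply: Hinf.
    apply: (@sub_finite_set _ _ ((fun p : nat*nat => (h (z p.1 p.2)).2) @`
       ([set i | (i < n.+1)%N] `*` [set t | (t < n.+1)%N]))).
      move=> m [x [i [t ->]] hx]; exists (i, t) => /=; last by rewrite hx.
      have := Hcs (i, (i + t)%N); rewrite /= -/(z i t) hx /= => le.
      split => /=; rewrite ltnS; apply: leq_trans le.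
        exact: leq_addr.
      exact: leq_addl.
    by apply: finite_image; apply: finite_setX; apply: finite_II.
  have [k [_ Hk]] := H _ FB.
  have fin := Hk k (leqnn k).
  have [M HM] := finite_nat_bound
      (finite_image (fun jl : nat * nat => (h (k, jl.1, jl.2)).1) fin).
  have := Hcs (k, (k + M)%N); rewrite /= => Hle.
  have : ((h (k, (c (k, (k + M)%N)).1, (c (k, (k + M)%N)).2)).1 < M)%N.
    apply: HM; exists (c (k, (k + M)%N)) => //.
    by exists (z k M) => //; exists k, M.
  move=> lt; move: (leq_ltn_trans Hle lt); rewrite ltnNge leq_addl.
  done.
pose A := [set p : nat*nat | (p.1 < N)%N].
have FA : Fin2 A.
  apply: (@sub_finite_set _ _ `I_N); last exact: finite_II.
  move=> n /= Hinf; rewrite ltnNge; apply/negP => nN; apply: Hinf.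
  apply: (@sub_finite_set _ _ set0); last exact: finite_set0.
  by move=> m /= nlt; move: nN; rewrite leqNgt nlt.
have [k [Hlt Hge]] := H _ FA.
case: (ltnP i0 k) => hk.
  have := Hlt _ hk; rewrite /Fin2 => fin; apply: infinite_nat.
  apply: sub_finite_set fin => j _ /= fin2; apply: infinite_nat.
  by apply: sub_finite_set fin2 => m _; exact: HN.
have := Hge _ hk => fin; apply: infinite_prod_nat.
by apply: sub_finite_set fin => -[j l] _; exact: HN.
Qed.

Definition cellidx (y : RR) : nat := (Num.truncn (y^-1)).-1.

Lemma cellidx_spec (y : RR) : 0 < y -> y <= 1 ->
  ((cellidx y).+2%:R)^-1 < y /\ y <= ((cellidx y).+1%:R)^-1.
Proof.
move=> y0 y1.
have yi1 : 1 <= y^-1.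
  by rewrite -[X in X <= _]invr1 lef_pV2 ?posrE ?ltr01.
have yi0 : 0 <= y^-1 by apply: le_trans yi1; exact: ler01.
have t1 : (0 < Num.truncn (y^-1))%N by rewrite truncn_gt0.
have /andP[le lt] := truncn_itv yi0.
rewrite /cellidx prednK //.
split.
  by rewrite -[X in _ < X]invrK ltf_pV2 ?posrE ?invr_gt0 ?ltr0Sn.
rewrite -[X in X <= _]invrK lef_pV2 ?posrE ?invr_gt0 //.
by rewrite ltr0n.
Qed.

Lemma cellidx_eq (y : RR) n : (n.+2%:R)^-1 < y -> y <= (n.+1%:R)^-1 ->
  cellidx y = n.
Proof.
move=> h1 h2.
have y0 : 0 < y by apply: lt_trans h1; rewrite invr_gt0 ltr0Sn.
rewrite /cellidx (@truncn_def _ _ n.+1) //; apply/andP; split.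
  by rewrite -[X in _ <= X]invrK -[X in X <= _]invrK lef_pV2 ?posrE ?invr_gt0 ?ltr0Sn // invrK.
by rewrite -[X in X < _]invrK -[X in _ < X]invrK ltf_pV2 ?posrE ?invr_gt0 ?ltr0Sn // invrK.
Qed.

Definition cl (lo hi : RR) (j : nat) := lo + (hi - lo) * (j.+2%:R)^-1.
Definition ch (lo hi : RR) (j : nat) := lo + (hi - lo) * (j.+1%:R)^-1.
Definition cidx (lo hi y : RR) := cellidx ((y - lo) / (hi - lo)).

Lemma cl_ch lo hi j : lo < hi -> lo < cl lo hi j /\ cl lo hi j < ch lo hi j /\ ch lo hi j <= hi.
Proof.
move=> lh; have L0 : 0 < hi - lo by rewrite subr_gt0.
have c0 : 0 < (j.+2%:R : RR)^-1 by rewrite invr_gt0 ltr0Sn.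
have c1 : (j.+2%:R : RR)^-1 < (j.+1%:R)^-1.
  by rewrite ltf_pV2 ?posrE ?ltr0Sn // ltr_nat.
have c2 : (j.+1%:R : RR)^-1 <= 1.
  by rewrite invr_le1 ?ler1n ?unitfE ?pnatr_eq0 // ltr0Sn.
rewrite /cl /ch; split; first by rewrite ltrDl mulr_gt0.
split; first by rewrite ltrD2l ltr_pM2l.
rewrite -lerBrDl; apply: ler_piMr => //; exact: ltW.
Qed.

Lemma ltaux (lo y X : RR) : X < y - lo -> lo + X < y. Proof. lra. Qed.
Lemma leaux (lo y X : RR) : y - lo <= X -> y <= lo + X. Proof. lra. Qed.
Lemma ltaux2 (lo y X : RR) : lo + X < y -> X < y - lo. Proof. lra. Qed.
Lemma leaux2 (lo y X : RR) : y <= lo + X -> y - lo <= X. Proof. lra. Qed.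

Lemma cidx_spec lo hi y : lo < y -> y <= hi ->
  cl lo hi (cidx lo hi y) < y /\ y <= ch lo hi (cidx lo hi y).
Proof.
move=> h1 h2.
have L0 : 0 < hi - lo by rewrite subr_gt0; exact: lt_le_trans h2.
have t0 : 0 < (y - lo) / (hi - lo) by rewrite divr_gt0 // subr_gt0.
have t1 : (y - lo) / (hi - lo) <= 1 by rewrite ler_pdivrMr // mul1r lerD2r.
have [a b] := cellidx_spec t0 t1.
rewrite /cl /ch /cidx; set c := cellidx _ in a b *.
move: a b; rewrite ltr_pdivlMr // ler_pdivrMr // => a b.
split.
  by apply: ltaux; rewrite mulrC.
by apply: leaux; rewrite mulrC.
Qed.

Lemma cidx_eq lo hi y j : lo < hi -> cl lo hi j < y -> y <= ch lo hi j ->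
  cidx lo hi y = j.
Proof.
move=> lh h1 h2.
have L0 : 0 < hi - lo by rewrite subr_gt0.
rewrite /cidx; apply: cellidx_eq.
  rewrite ltr_pdivlMr // mulrC; exact: ltaux2.
rewrite ler_pdivrMr // mulrC; exact: leaux2.
Qed.

Import Defs.
Notation toR := Q01_to_R.

Lemma Q01_bounds (x : Q01) : 0 <= toR x <= 1.
Proof.
case: x => q hq; case/andP: (hq) => q0 q1; rewrite /Q01_to_R /=.
by rewrite ler0q q0 /= -(rmorph1 (ratr : rat -> RR)) ler_rat.
Qed.

Lemma z0_proof : (0 <= (0 : rat) <= 1)%R.
Proof. by rewrite lexx ler01. Qed.
Definition z0 : Q01 := exist _ 0 z0_proof.

Lemma zero_fin : finite_set [set x : Q01 | toR x <= 0].
Proof.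
apply: (@sub_finite_set _ _ [set z0]); last exact: finite_set1.
move=> [q hq] /=; rewrite /Q01_to_R /= lerq0 => hq0.
case/andP: (hq) => hq1 _.
have e : q = 0 by apply: le_anti; rewrite hq0 hq1.
by rewrite /z0; apply: val_inj => /=.
Qed.

Definition lo (i : nat) : RR := cl 0 1 i.
Definition hi (i : nat) : RR := ch 0 1 i.

Definition idx (x : Q01) : nat * nat :=
  if toR x <= 0 then (0%N, 0%N) else
  (cidx 0 1 (toR x), cidx (lo (cidx 0 1 (toR x))) (hi (cidx 0 1 (toR x))) (toR x)).

Lemma lohi i : 0 < lo i /\ lo i < hi i /\ hi i <= 1.
Proof. by have := @cl_ch 0 1 i ltr01; rewrite /lo /hi. Qed.

Lemma idx_spec x : 0 < toR x ->
  lo (idx x).1 < toR x <= hi (idx x).1 /\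
  cl (lo (idx x).1) (hi (idx x).1) (idx x).2 < toR x <=
  ch (lo (idx x).1) (hi (idx x).1) (idx x).2.
Proof.
move=> x0; rewrite /idx leNgt x0 /=.
have /andP[_ x1] := Q01_bounds x.
have [a b] := cidx_spec x0 x1.
have [c d] := cidx_spec a b.
by rewrite /lo /hi a b c d.
Qed.

Lemma idx_eq x i j :
  cl (lo i) (hi i) j < toR x -> toR x <= ch (lo i) (hi i) j -> idx x = (i, j).
Proof.
move=> h1 h2.
have [l0 [lh h1']] := lohi i.
have [a [b c]] := @cl_ch (lo i) (hi i) j lh.
have x0 : 0 < toR x by apply: lt_trans h1; apply: lt_trans a.
have ei : cidx 0 1 (toR x) = i.
  apply: cidx_eq; [exact: ltr01 | exact: lt_trans a h1 | exact: le_trans h2 c].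
by rewrite /idx leNgt x0 /= ei (cidx_eq lh h1 h2).
Qed.

Lemma finite_outside (s : nat -> Q01) (l c d : RR) :
  (fun n => toR (s n)) @ \oo --> l -> (l < c \/ d < l) ->
  finite_set (range s `&` [set x | c < toR x <= d]).
Proof.
move=> cv H.
have [e [e0 He]] : exists e, 0 < e /\ forall y, c < y <= d -> e <= `|l - y|.
  case: H => h; [exists (c - l) | exists (l - d)]; split; try lra.
    by move=> y /andP[y1 y2]; rewrite ler_normr; apply/orP; right; lra.
  by move=> y /andP[y1 y2]; rewrite ler_normr; apply/orP; left; lra.
have [M HM] := cvg_ev cv e0.
apply: (@sub_finite_set _ _ (s @` `I_M)); last by apply: finite_image; exact: finite_II.
move=> _ [[n _ <-] hx]; exists n => //=.
rewrite ltnNge; apply/negP => Mn.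
by have := HM n Mn; rewrite ltNge (He _ hx).
Qed.

Lemma slice_sub i : [set x | (idx x).1 = i] `<=`
   [set x | toR x <= 0] `|` [set x | lo i < toR x <= hi i].
Proof.
move=> x /= <-; case: (lerP (toR x) 0) => x0; [by left | right].
by have [] := idx_spec x0.
Qed.

Lemma fiber_sub i j : [set x | idx x = (i, j)] `<=`
   [set x | toR x <= 0] `|` [set x | cl (lo i) (hi i) j < toR x <= ch (lo i) (hi i) j].
Proof.
move=> x /= e; case: (lerP (toR x) 0) => x0; [by left | right].
by have [_] := idx_spec x0; rewrite e.
Qed.

Lemma fin_split (s : nat -> Q01) (S P : set Q01) :
  S `<=` [set x | toR x <= 0] `|` P -> finite_set (range s `&` P) ->
  finite_set (range s `&` S).
Proof.
move=> SP fP.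
apply: (@sub_finite_set _ _ ([set x | toR x <= 0] `|` (range s `&` P))).
  by move=> x [rx /SP [h|h]]; [left | right].
by rewrite finite_setU; split => //; exact: zero_fin.
Qed.

Lemma A1 (s : nat -> Q01) (l : RR) :
  (fun n => toR (s n)) @ \oo --> l ->
  exists k, forall i, (k <= i)%N ->
    finite_set (range s `&` [set x | (idx x).1 = i]).
Proof.
move=> cv.
case: (lerP l 0) => hl.
  exists 0%N => i _; apply: (fin_split (@slice_sub i)).
  apply: finite_outside cv _; left.
  by have [l0 _] := lohi i; apply: le_lt_trans hl l0.
exists (Num.truncn l^-1) => i ki; apply: (fin_split (@slice_sub i)).
apply: finite_outside cv _; right.
have lt := truncnS_gt l^-1.
rewrite /hi /ch subr0 mul1r add0r.
rewrite -[X in _ < X]invrK ltf_pV2 ?posrE ?invr_gt0 ?ltr0Sn //.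
apply: lt_le_trans lt _; by rewrite ler_nat.
Qed.

Lemma A2 (s : nat -> Q01) (l : RR) i :
  (fun n => toR (s n)) @ \oo --> l ->
  finite_set [set j | infinite_set (range s `&` [set x | idx x = (i, j)])].
Proof.
move=> cv.
have [l0 [lh h1]] := lohi i.
pose K := Num.truncn ((hi i - lo i) / (l - lo i)).
apply: (@sub_finite_set _ _ `I_K); last exact: finite_II.
move=> j /= Hinf; rewrite ltnNge; apply/negP => Kj; apply: Hinf.
apply: (fin_split (@fiber_sub i j)).
apply: finite_outside cv _.
have [a [b c]] := @cl_ch (lo i) (hi i) j lh.
case: (lerP l (lo i)) => hl; [left; exact: le_lt_trans hl a | right].
have L0 : 0 < hi i - lo i by rewrite subr_gt0.
have d0 : 0 < l - lo i by rewrite subr_gt0.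
have lt := truncnS_gt ((hi i - lo i) / (l - lo i)).
have lt2 : (hi i - lo i) / (l - lo i) < j.+1%:R.
  by apply: lt_le_trans lt _; rewrite ler_nat.
move: lt2; rewrite ltr_pdivrMr // => lt2.
rewrite /ch; apply: (@ltaux (lo i)).
by rewrite ltr_pdivrMr ?ltr0Sn // mulrC.
Qed.

Lemma Fin2_sub (A B : set (nat * nat)) : A `<=` B -> Fin2 B -> Fin2 A.
Proof.
move=> AB; apply: sub_finite_set => n /= Hinf fin; apply: Hinf.
by apply: sub_finite_set fin => m /AB.
Qed.

Lemma Fin2_finite (A : set (nat * nat)) : finite_set A -> Fin2 A.
Proof.
move=> fA; apply: (@sub_finite_set _ _ set0); last exact: finite_set0.
move=> n /= Hinf; apply: Hinf.
apply: (sub_finite_set _ (finite_image snd fA)) => m /= h.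
by exists (n, m).
Qed.

Lemma Fin2U (A B : set (nat * nat)) : Fin2 A -> Fin2 B -> Fin2 (A `|` B).
Proof.
move=> fA fB.
apply: (@sub_finite_set _ _ ([set n | infinite_set [set m | A (n, m)]] `|`
                              [set n | infinite_set [set m | B (n, m)]])).
  move=> n /= Hinf; apply: contrapT => H; apply: Hinf.
  apply: (@sub_finite_set _ _ ([set m | A (n, m)] `|` [set m | B (n, m)])).
    by move=> m [h|h]; [left|right].
  rewrite finite_setU; split; apply: contrapT => h; apply: H; by [left|right].
by rewrite finite_setU.
Qed.

Lemma BI_sub (A B : set (nat * nat * nat)) : A `<=` B -> BI B -> BI A.
Proof.
move=> AB [k [h1 h2]]; exists k; split.
  by move=> i ik; apply: Fin2_sub (h1 i ik) => jl /AB.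
by move=> i ik; apply: sub_finite_set (h2 i ik) => jl /AB.
Qed.

Lemma BIU (A B : set (nat * nat * nat)) : BI A -> BI B -> BI (A `|` B).
Proof.
move=> [ka [a1 a2]] [kb [b1 b2]]; exists (maxn ka kb); split.
  move=> i _.
  apply: (@Fin2_sub _ ([set jl | A (i, jl.1, jl.2)] `|` [set jl | B (i, jl.1, jl.2)])).
    by move=> jl [h|h]; [left|right].
  apply: Fin2U.
    by case: (ltnP i ka) => h; [exact: a1 | apply: Fin2_finite; exact: a2].
  by case: (ltnP i kb) => h; [exact: b1 | apply: Fin2_finite; exact: b2].
move=> i; rewrite geq_max => /andP[ha hb].
apply: (@sub_finite_set _ _ ([set jl | A (i, jl.1, jl.2)] `|` [set jl | B (i, jl.1, jl.2)])).
  by move=> jl [h|h]; [left|right].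
by rewrite finite_setU; split; [exact: a2 | exact: b2].
Qed.

Lemma BI0 : BI set0.
Proof. by exists 0%N; split => // i _; exact: finite_set0. Qed.

Section Part1.
Variables (f : nat * nat * nat -> Q01) (phi : Q01 -> nat * nat * nat).
Hypothesis fK : cancel f phi.
Hypothesis hidx : forall t, idx (f t) = t.1.

Lemma BI_range (s : nat -> Q01) : conv_seq s -> BI (f @^-1` range s).
Proof.
move=> [l [_ cv]].
have [k Hk] := A1 cv.
exists k; split.
  move=> i _; rewrite /Fin2.
  apply: sub_finite_set (A2 i cv) => j /= Hinf fin; apply: Hinf.
  apply: (sub_finite_set _ (finite_image (fun x => (phi x).2) fin)).
  move=> m /= rm; exists (f (i, j, m)); last by rewrite fK.
  by split => //; rewrite hidx.
move=> i ki.
apply: (sub_finite_set _ (finite_image (fun x => ((phi x).1.2, (phi x).2)) (Hk i ki))).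
move=> [j m] /= rm; exists (f (i, j, m)); last by rewrite fK.
by split => //; rewrite hidx.
Qed.

Lemma BI_conv (A : set Q01) : conv A -> BI (f @^-1` A).
Proof.
move=> [ss [hss sub]].
apply: (@BI_sub _ (f @^-1` [set x | exists2 s, s \in ss & range s x])).
  by move=> t /= /sub.
elim: ss hss {sub} => [|s ss IH] hss.
  by apply: (BI_sub _ BI0) => t /= [s].
apply: (@BI_sub _ ((f @^-1` range s) `|` (f @^-1` [set x | exists2 s, s \in ss & range s x]))).
  move=> t /= [s0]; rewrite in_cons => /orP[/eqP -> h|h1 h2]; first by left.
  by right; exists s0.
apply: BIU; first by apply: BI_range; apply: hss; exact: mem_head.
by apply: IH => s0 h; apply: hss; rewrite in_cons h orbT.
Qed.
End Part1.

Lemma fiber_infinite i j : infinite_set [set x | idx x = (i, j)].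
Proof.
move=> /finite_seqP [L eL].
have [l0 [lh h1]] := lohi i.
have [a [b c]] := @cl_ch (lo i) (hi i) j lh.
have [q [/andP[q1 q2] qL]] := avoid (map toR L) b.
have q0 : 0 <= ratr q :> RR.
  by apply: ltW; apply: lt_trans q1; apply: lt_trans a.
have q1' : ratr q <= 1 :> RR.
  by apply: ltW; apply: lt_le_trans q2 _; apply: le_trans c h1.
have [x hx] := mkQ01 q0 q1'.
have e : idx x = (i, j) by apply: idx_eq; rewrite hx // ltW.
have : [set x | idx x = (i, j)] x := e.
rewrite eL /= => xL.
by move: qL; rewrite -hx (map_f _ xL).
Qed.

Lemma part1 : ideal_below conv BI.
Proof.
have HF : forall p : nat * nat, exists F : Q01 -> nat,
    set_bij [set x | idx x = p] [set: nat] F.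
  move=> [i j]; apply/card_set_bijP.
  by apply: eq_card_nat; [exact: countableP | exact: fiber_infinite].
have [F HF'] := choice HF.
pose phi x := (idx x, F (idx x) x).
have phi_inj : injective phi.
  move=> x y [e1 e2].
  have [_ inj _] := HF' (idx x).
  by apply: inj; rewrite ?inE //= e2 e1.
have phi_surj : forall t, exists x, phi x = t.
  move=> [[i j] l]; have [_ _ surj] := HF' (i, j).
  have [x xi <-] := surj l I.
  by exists x; rewrite /phi xi.
have [f Hf] := choice phi_surj.
exists f; split.
  by exists phi; [move=> t; exact: Hf | move=> x; apply: phi_inj; exact: Hf].
apply: (@BI_conv f phi Hf).
by move=> t; rewrite -[in RHS](Hf t).
Qed.

Close Scope ring_scope.
Import Defs.

Theorem proposition4p6 :
  ideal_below conv BI /\ ideal_below BI Fin2 /\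
  ~ ideal_below BI conv /\ ~ ideal_below Fin2 BI.
Proof.
split; first exact: part1.
split; first exact: part2.
split; first exact: part3.
exact: part4.
Qed.
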